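(* Let $w\in C_b^2(\mathbb{R})$ be nowhere vanishing and $\theta:=\frac{w_x}{w}$. Suppose that $\inf_{x\in\mathbb{R}}\big(-\theta'(x)+\theta^2(x)\big)\ge\kappa_0>0$ and that there exists $\hat x\in\mathbb{R}$ with $\theta(\hat x)=0$. Then $$\int_{\mathbb{R}}h^2w^2\,dx\le\frac{1}{\kappa_0}\int_{\mathbb{R}}h_x^2w^2\,dx$$ for every $h\in C_b^1(\mathbb{R})$ with $h(\hat x)=0$.
   Context: $C_b^k(\mathbb{R})$ denotes $k$ times continuously differentiable functions which are bounded together with their derivatives up to order $k$. *)

(* Defs.v *)
From HB Require Import structures.
From mathcomp Require Import all_boot all_order all_algebra.
From mathcomp Require Import all_classical all_reals all_analysis.
Set Implicit Arguments. Unset Strict Implicit. Unset Printing Implicit Defensive.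
Import Order.TTheory GRing.Theory Num.Theory.
Import numFieldNormedType.Exports.
Local Open Scope ring_scope.

Definition bounded_fun (R : realType) (f : R -> R) : Prop :=
  exists M : R, forall x, `|f x| <= M.

Definition Cb1 (R : realType) (f : R -> R) : Prop :=
  [/\ (forall x, derivable f x 1), continuous (derive1 f),
      bounded_fun f & bounded_fun (derive1 f)].

Definition Cb2 (R : realType) (f : R -> R) : Prop :=
  Cb1 f /\ Cb1 (derive1 f).

(* Main.v *)
Require Import Defs.
From HB Require Import structures.
From mathcomp Require Import all_boot all_order all_algebra.
From mathcomp Require Import all_classical all_reals all_analysis.
From mathcomp Require Import ring lra.
From mathcomp Require Import measurable_realfun.
Import Order.TTheory GRing.Theory Num.Theory.
Import numFieldNormedType.Exports.
Local Open Scope ring_scope.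

Lemma key_alg {R : realType} (k f g th th' u : R) :
  0 < k -> k <= - th' + th ^+ 2 ->
  th' * u ^+ 2 + 2 * th * u * (g - th * u) - 2 * (f + th * g) * u - 2 * g * (g - th * u)
  <= f ^+ 2 / k - g ^+ 2.
Proof.
move=> k0 hk.
have e : f ^+ 2 / k = (f + k * u) ^+ 2 / k - 2 * f * u - k * u ^+ 2.
  by field; rewrite gt_eqF.
rewrite e.
have h1 : 0 <= (f + k * u) ^+ 2 / k by rewrite divr_ge0 // ?sqr_ge0 // ltW.
have h2 : 0 <= (g - th * u) ^+ 2 by rewrite sqr_ge0.
have h3 : (k - th ^+ 2) * u ^+ 2 <= - th' * u ^+ 2.
  by rewrite ler_wpM2r ?sqr_ge0 //; lra.
nra.
Qed.

Lemma dMul {R : realType} {f g : R -> R} {x df dg : R} :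
  is_derive x 1 f df -> is_derive x 1 g dg ->
  is_derive x 1 (fun t => f t * g t) (df * g x + f x * dg).
Proof.
move=> H1 H2; have := is_deriveM H1 H2.
by move=> H; apply: is_derive_eq; rewrite /GRing.scale /= mulrC addrC (mulrC (g x)).
Qed.

Lemma dAdd {R : realType} {f g : R -> R} {x df dg : R} :
  is_derive x 1 f df -> is_derive x 1 g dg ->
  is_derive x 1 (fun t => f t + g t) (df + dg).
Proof. by move=> H1 H2; have := is_deriveD H1 H2. Qed.

Lemma dSub {R : realType} {f g : R -> R} {x df dg : R} :
  is_derive x 1 f df -> is_derive x 1 g dg ->
  is_derive x 1 (fun t => f t - g t) (df - dg).
Proof. by move=> H1 H2; have := is_deriveB H1 H2. Qed.

Lemma dCst {R : realType} (c x : R) : is_derive x 1 (fun _ : R => c) 0.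
Proof. exact: is_derive_cst. Qed.

Lemma dInv {R : realType} {f : R -> R} {x df : R} :
  is_derive x 1 f df -> f x != 0 ->
  is_derive x 1 (fun t => (f t)^-1) (- df / f x ^+ 2).
Proof.
move=> [d1 d2] fx0; split; first exact: derivableV.
by rewrite deriveV // d2 [LHS]/GRing.scale /= mulNr mulrC mulNr.
Qed.

Lemma dOf {R : realType} {f : R -> R} {x : R} :
  derivable f x 1 -> is_derive x 1 f (derive1 f x).
Proof. by move=> H; rewrite derive1E; apply: derivableP. Qed.

Lemma dVal {R : realType} {f : R -> R} {x df : R} :
  is_derive x 1 f df -> derivable f x 1 /\ derive1 f x = df.
Proof. move=> H; split; first exact: ex_derive. by rewrite derive1E derive_val. Qed.

Local Open Scope classical_set_scope.

Lemma int_cc {R : realType} (p : R -> R) (a b : R) : continuous p ->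
  (@lebesgue_measure R).-integrable `[a, b] (EFin \o p).
Proof.
move=> cp; apply: continuous_compact_integrable; first exact: segment_compact.
exact: continuous_subspaceT.
Qed.

Lemma ltrDl_1 {R : realType} (x : R) : x < x + 1.
Proof. by rewrite ltrDl. Qed.

Lemma ftc_pt {R : realType} (p : R -> R) (c x : R) : continuous p -> c < x ->
  is_derive x 1 (fun t => \int[@lebesgue_measure R]_(s in `[c, t]) p s) (p x).
Proof.
move=> cp cx.
have [H1 H2] := @continuous_FTC1_closed R p c x (x + 1) (ltrDl_1 x) (int_cc p c (x+1) cp) cx (cp x).
by split => //; rewrite -derive1E.
Qed.

Lemma cM {R : realType} (f g : R -> R) : continuous f -> continuous g ->
  continuous (fun x => f x * g x).
Proof. by move=> cf cg x; exact: (continuousM (cf x) (cg x)). Qed.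

Lemma cB {R : realType} (f g : R -> R) : continuous f -> continuous g ->
  continuous (fun x => f x - g x).
Proof. by move=> cf cg x; apply: cvgB; [exact: cf|exact: cg]. Qed.

Lemma cC {R : realType} (k : R) : continuous (fun _ : R => k).
Proof. by move=> x; apply: cst_continuous. Qed.

Lemma dSq {R : realType} {f : R -> R} {x df : R} :
  is_derive x 1 f df -> is_derive x 1 (fun t => f t ^+ 2) (df * f x + f x * df).
Proof.
move=> H; have -> : (fun t => f t ^+ 2) = (fun t => f t * f t).
  by apply/funext => t; rewrite expr2.
exact: dMul.
Qed.

Lemma half {R : realType} (w h : R -> R) (k c K a b : R) :
  (forall x, derivable w x 1) -> (forall x, derivable h x 1) ->
  (forall x, w x != 0) ->
  (forall x, derivable (fun y => derive1 w y / w y) x 1) ->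
  continuous (derive1 h) ->
  0 < k ->
  (forall x, k <= - derive1 (fun y => derive1 w y / w y) x + (derive1 w x / w x) ^+ 2) ->
  c < a -> a <= b ->
  let F t := \int[@lebesgue_measure R]_(s in `[c, t]) (w s ^+ 2 * h s) in
  let u t := (F t - K) / w t in
  let Psi t := derive1 w t / w t * u t ^+ 2 - 2 * (h t * w t) * u t in
  Psi a = 0 -> Psi b = 0 ->
  \int[@lebesgue_measure R]_(x in `[a, b]) ((h x * w x) ^+ 2) <=
    k^-1 * \int[@lebesgue_measure R]_(x in `[a, b]) ((derive1 h x * w x) ^+ 2).
Proof.
move=> dw dh w0 dth ch' k0 hk ca ab F u Psi Pa Pb.
set th := fun y => derive1 w y / w y.
have cw : continuous w.
  by move=> x; apply: differentiable_continuous; apply/derivable1_diffP.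
have ch : continuous h.
  by move=> x; apply: differentiable_continuous; apply/derivable1_diffP.
pose phi x := (derive1 h x * w x) ^+ 2 / k - (h x * w x) ^+ 2.
have cphi : continuous phi.
  rewrite /phi; apply: cB; last by rewrite /GRing.exp /=; apply: cM; apply: cM.
  apply: cM; last exact: cC.
  by rewrite /GRing.exp /=; apply: cM; apply: cM.
have cwh : continuous (fun s => w s ^+ 2 * h s).
  by apply: cM => //; rewrite /GRing.exp /=; apply: cM.
pose G t := \int[@lebesgue_measure R]_(s in `[c, t]) phi s.
pose D t := G t - Psi t.
have dD : forall x, c < x -> exists2 dd, is_derive x 1 D dd & 0 <= dd.
  move=> x cx.
  have dF : is_derive x 1 F (w x ^+ 2 * h x) by exact: ftc_pt.
  have du : is_derive x 1 u ((w x ^+ 2 * h x - 0) * (w x)^-1 + (F x - K) * (- derive1 w x / w x ^+ 2)).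
    rewrite /u; apply: dMul.
    have H := (dInv (dOf (dw x)) (w0 x)). exact H.
  eexists.
    rewrite /D /Psi; apply: dSub; first exact: (ftc_pt _ _ _ cphi cx).
    apply: dSub; first exact: (dMul (dOf (dth x)) (dSq du)).
    exact: (dMul (dMul (dCst 2 x) (dMul (dOf (dh x)) (dOf (dw x)))) du).
  rewrite subr_ge0.
  have KA := key_alg k (derive1 h x * w x) (h x * w x) (derive1 w x / w x)
     (derive1 (fun y => derive1 w y / w y) x) (u x) k0 (hk x).
  rewrite /phi; apply: le_trans KA.
  rewrite le_eqVlt; apply/orP; left; apply/eqP.
  rewrite /u; field; exact: w0.
have Dab : D a <= D b.
  apply: (@ger0_derive1_ndecr R D a b) => //.
  - move=> x; rewrite in_itv /= => /andP[ax _].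
    by have [dd /dVal[] ] := dD x (lt_trans ca ax).
  - move=> x; rewrite in_itv /= => /andP[ax _].
    by have [dd /dVal[_ ->] ] := dD x (lt_trans ca ax).
  - apply: continuous_in_subspaceT => x; rewrite inE /= in_itv /= => /andP[ax _].
    have [dd /dVal[dx _] _] := dD x (lt_le_trans ca ax).
    by apply: differentiable_continuous; apply/derivable1_diffP.
have Gab : G a <= G b by move: Dab; rewrite /D Pa Pb !subr0.
have ci1 : continuous (fun x => (derive1 h x * w x) ^+ 2).
  by rewrite /GRing.exp /=; apply: cM; apply: cM.
have ci2 : continuous (fun x => (h x * w x) ^+ 2).
  by rewrite /GRing.exp /=; apply: cM; apply: cM.
have E : G b - G a = \int[@lebesgue_measure R]_(x in `[a, b]) phi x.
  rewrite /G Rintegral_itvB; last 3 first.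
  - exact: int_cc.
  - by rewrite bnd_simp ltW.
  - by rewrite bnd_simp.
  rewrite Rintegral_itv_obnd_cbnd //; apply: (integrableS _ _ _ (int_cc phi a b cphi)) => //; apply: subset_itvr; by rewrite bnd_simp.
have : 0 <= \int[@lebesgue_measure R]_(x in `[a, b]) phi x.
  by rewrite -E subr_ge0.
rewrite /phi RintegralB //; last 2 first.
- by apply: int_cc; apply: cM => //; exact: cC.
- exact: int_cc.
rewrite RintegralZr //; last exact: int_cc.
by rewrite subr_ge0 mulrC.
Qed.

Lemma split_int {R : realType} (p : R -> R) (L m Rr : R) : continuous p ->
  L <= m -> m <= Rr ->
  \int[@lebesgue_measure R]_(x in `[L, Rr]) p x =
  \int[@lebesgue_measure R]_(x in `[L, m]) p x + \int[@lebesgue_measure R]_(x in `[m, Rr]) p x.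
Proof.
move=> cp Lm mR.
have := @Rintegral_itvB R p (BLeft L) (BRight Rr) m (int_cc p L Rr cp).
rewrite !bnd_simp => /(_ Lm mR) E.
rewrite -(@Rintegral_itv_obnd_cbnd R m (BRight Rr) p) -?E; first by rewrite addrC subrK.
apply: (integrableS _ _ _ (int_cc p m Rr cp)) => //; apply: subset_itvr; by rewrite bnd_simp.
Qed.

Lemma interval_ineq {R : realType} (w h : R -> R) (k xh L Rr : R) :
  (forall x, derivable w x 1) -> (forall x, derivable h x 1) ->
  (forall x, w x != 0) ->
  (forall x, derivable (fun y => derive1 w y / w y) x 1) ->
  continuous (derive1 h) ->
  0 < k ->
  (forall x, k <= - derive1 (fun y => derive1 w y / w y) x + (derive1 w x / w x) ^+ 2) ->
  derive1 w xh / w xh = 0 -> h xh = 0 ->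
  L <= xh -> xh <= Rr ->
  \int[@lebesgue_measure R]_(x in `[L, Rr]) ((h x * w x) ^+ 2) <=
    k^-1 * \int[@lebesgue_measure R]_(x in `[L, Rr]) ((derive1 h x * w x) ^+ 2).
Proof.
move=> dw dh w0 dth ch' k0 hk th0 h0 Lx xR.
have ch : continuous h.
  by move=> x; apply: differentiable_continuous; apply/derivable1_diffP.
have cw : continuous w.
  by move=> x; apply: differentiable_continuous; apply/derivable1_diffP.
have ci1 : continuous (fun x => (derive1 h x * w x) ^+ 2).
  by rewrite /GRing.exp /=; apply: cM; apply: cM.
have ci2 : continuous (fun x => (h x * w x) ^+ 2).
  by rewrite /GRing.exp /=; apply: cM; apply: cM.
have HL := half w h k (L - 1) (\int[@lebesgue_measure R]_(s in `[L - 1, L]) (w s ^+ 2 * h s))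
  L xh dw dh w0 dth ch' k0 hk.
have HR := half w h k (xh - 1) (\int[@lebesgue_measure R]_(s in `[xh - 1, Rr]) (w s ^+ 2 * h s))
  xh Rr dw dh w0 dth ch' k0 hk.
have c1 : forall y : R, y - 1 < y by move=> y; rewrite ltrBlDr ltrDl.
have {}HL := HL (c1 L) Lx.
have {}HR := HR (c1 xh) xR.
simpl in HL, HR.
rewrite subrr mul0r expr0n /= mulr0 mulr0 subr0 in HL.
rewrite th0 h0 !(mul0r, mulr0) subr0 in HL.
rewrite subrr mul0r expr0n /= mulr0 mulr0 subr0 in HR.
rewrite th0 h0 !(mul0r, mulr0) subr0 in HR.
have {}HL := HL erefl erefl.
have {}HR := HR erefl erefl.
rewrite (split_int _ _ _ _ ci1 Lx xR) (split_int _ _ _ _ ci2 Lx xR) mulrDr.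
exact: lerD.
Qed.

Lemma EFin_Rint {R : realType} (p : R -> R) (a b : R) : continuous p ->
  (\int[@lebesgue_measure R]_(x in `[a, b]) p x)%:E =
  (\int[@lebesgue_measure R]_(x in `[a, b]) (p x)%:E)%E.
Proof.
move=> cp; rewrite /Rintegral fineK //.
by apply: integrable_fin_num => //; exact: int_cc.
Qed.

Theorem proposition5p5 (R : realType) (w : R -> R) (kappa0 : R) (xhat : R) :
  Cb2 w ->
  (forall x, w x != 0) ->
  0 < kappa0 ->
  (forall x, kappa0 <= - derive1 (fun y => derive1 w y / w y) x + (derive1 w x / w x) ^+ 2) ->
  derive1 w xhat / w xhat = 0 ->
  forall h : R -> R, Cb1 h -> h xhat = 0 ->
  (\int[lebesgue_measure]_(x in [set: R]) ((h x) ^+ 2 * (w x) ^+ 2)%:E <=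
   (kappa0^-1)%:E * \int[lebesgue_measure]_(x in [set: R]) ((derive1 h x) ^+ 2 * (w x) ^+ 2)%:E)%E.
Proof.
move=> [[dw _ _ _] [dw1 _ _ _]] w0 k0 hk th0 h [dh ch' _ _] h0.
have dth : forall x, derivable (fun y => derive1 w y / w y) x 1.
  move=> x; have H := dMul (dOf (dw1 x)) (dInv (dOf (dw x)) (w0 x)); case: H => H _; exact: H.
have ch : continuous h.
  by move=> x; apply: differentiable_continuous; apply/derivable1_diffP.
have cw : continuous w.
  by move=> x; apply: differentiable_continuous; apply/derivable1_diffP.
have ci1 : continuous (fun x => (derive1 h x * w x) ^+ 2).
  by rewrite /GRing.exp /=; apply: cM; apply: cM.
have ci2 : continuous (fun x => (h x * w x) ^+ 2).
  by rewrite /GRing.exp /=; apply: cM; apply: cM.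
have -> : (fun x => ((h x) ^+ 2 * (w x) ^+ 2)%:E) = (fun x => ((h x * w x) ^+ 2)%:E).
  by apply/funext => x; rewrite exprMn.
have -> : (fun x => ((derive1 h x) ^+ 2 * (w x) ^+ 2)%:E) = (fun x => ((derive1 h x * w x) ^+ 2)%:E).
  by apply/funext => x; rewrite exprMn.
pose A (n : nat) := `[xhat - n%:R, xhat + n%:R] : set R.
have mA : forall n, measurable (A n) by move=> n; exact: measurable_itv.
have nndA : nondecreasing_seq A.
  apply/nondecreasing_seqP => n; rewrite subsetEset; apply: subset_itv; rewrite bnd_simp -natr1; lra.
have UA : \bigcup_n A n = [set: R].
  apply/seteqP; split => // x _.
  exists (Num.Def.archi_bound `|x - xhat|) => //.
  have := archi_boundP (normr_ge0 (x - xhat)).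
  rewrite /A /= in_itv /= => /ltW; rewrite ler_distl => /andP[-> ->] //.
have f0 : forall i x, A i x -> (0 <= ((h x * w x) ^+ 2)%:E)%E.
  by move=> i x _; rewrite lee_fin sqr_ge0.
have cvgL := @ge0_nondecreasing_set_cvg_integral _ (measurableTypeR R) R A (fun x => ((h x * w x) ^+ 2)%:E) (@lebesgue_measure R) nndA mA _ f0.
lapply cvgL; last first.
  move=> i; apply/measurable_EFinP; apply: measurable_funS (continuous_measurable_fun ci2) => //.
move=> {}cvgL.
rewrite UA in cvgL.
rewrite -(cvg_lim _ cvgL) //.
apply: lime_le; first by apply/cvg_ex; eexists; exact: cvgL.
apply: nearW => n.
apply: (@le_trans _ _ ((kappa0^-1)%:E * \int[lebesgue_measure]_(x in A n) ((derive1 h x * w x) ^+ 2)%:E)%E).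
  rewrite /A -(EFin_Rint _ _ _ ci2) -(EFin_Rint _ _ _ ci1) -EFinM lee_fin.
  apply: (interval_ineq w h kappa0 xhat (xhat - n%:R) (xhat + n%:R)) => //.
  - by rewrite lerBlDr lerDl ler0n.
  - by rewrite lerDl ler0n.
have k0' : (0 <= (kappa0^-1)%:E)%E by rewrite lee_fin invr_ge0 ltW.
apply: (lee_wpmul2l k0').
apply: ge0_subset_integral => //.
- exact: measurable_itv.
- apply/measurable_EFinP; exact: continuous_measurable_fun.
- by move=> x _; rewrite lee_fin sqr_ge0.
Qed.
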